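(* Let $X$ be a topological space (no separation axioms assumed) that is both locally $\mathfrak{c}$ and $\mathfrak{c}$-fair, and suppose $t(x,X)<\operatorname{cf}(\mathfrak{c})$ for every $x\in X$. If $|X|>\mathfrak{c}$, then there exists a clopen subset $U$ of $X$ with $|U|=L(U)=\mathfrak{c}$.
   Context: A space $X$ is locally $\mathfrak{c}$ if every point has a neighbourhood of cardinality $\le\mathfrak{c}$. $X$ is $\mathfrak{c}$-fair if the closure of every subset of $X$ of cardinality $\mathfrak{c}$ also has cardinality $\mathfrak{c}$. $t(x,X)$ denotes the tightness of $X$ at $x$, and $L(U)$ the Lindelöf number of $U$ (the least infinite cardinal $\lambda$ such that every open cover of $U$ has a subcover of size $\le\lambda$). *)

(* Defs.v *)
(* The cardinal c (continuum) is represented by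
   the set [set: set nat] (|P(omega)| = 2^aleph0 = c). *)
From HB Require Import structures.
From mathcomp Require Import all_boot all_order all_algebra.
From mathcomp Require Import all_classical all_reals all_analysis.
Set Implicit Arguments. Unset Strict Implicit. Unset Printing Implicit Defensive.
Local Open Scope classical_set_scope.
Local Open Scope card_scope.

Definition cont : set (set nat) := [set: set nat].

Definition locally_c (T : topologicalType) : Prop :=
  forall x : T, exists N : set T, nbhs x N /\ N #<= cont.

Definition c_fair (T : topologicalType) : Prop :=
  forall A : set T, A #= cont -> closure A #= cont.

Definition tightness_le (T : topologicalType) (x : T) {U} (K : set U) : Prop :=
  forall A : set T, closure A x ->
    exists B : set T, B `<=` A /\ B #<= K /\ closure B x.

(* |K| < cf(c) : c is not the union of a K-indexed family of sets each of
   cardinality < c *)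
Definition lt_cf_cont {U} (K : set U) : Prop :=
  ~ exists F : U -> set (set nat),
      (forall k, K k -> ~ (cont #<= F k)) /\ \bigcup_(k in K) F k = cont.

Definition tightness_lt_cf_cont (T : topologicalType) (x : T) : Prop :=
  exists K : set (set nat), lt_cf_cont K /\ tightness_le x K.

Definition lindelof_le (T : topologicalType) (U : set T) {V} (K : set V) : Prop :=
  forall C : set (set T), (forall W, C W -> open W) ->
    U `<=` \bigcup_(W in C) W ->
    exists D : set (set T), D `<=` C /\ D #<= K /\ U `<=` \bigcup_(W in D) W.

Definition lindelof_number_eq_cont (T : topologicalType) (U : set T) : Prop :=
  lindelof_le U cont /\
  ~ (exists K : set (set nat), ~ (cont #<= K) /\ [set: nat] #<= K /\ lindelof_le U K).

(* Main.v *)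
Require Import Defs.
From HB Require Import structures.
From mathcomp Require Import all_boot all_order all_algebra.
From mathcomp Require Import all_classical all_reals all_analysis.
From mathcomp Require Import wochoice.
Local Open Scope classical_set_scope.
Local Open Scope card_scope.

Set Implicit Arguments. Unset Strict Implicit. Unset Printing Implicit Defensive.


Lemma cle_of T U (A : set T) (B : set U) (f : T -> U) :
  (forall a, A a -> B (f a)) ->
  (forall a b, A a -> A b -> f a = f b -> a = b) -> A #<= B.
Proof.
move=> fAB finj.
have h : f @` A #= A.
  apply: inj_card_eq => a b /set_mem Aa /set_mem Ab; exact: finj.
apply: (@card_le_trans _ _ _ (f @` A)).
  by move: h; rewrite card_eq_sym => /card_eqPle[].
by apply: subset_card_le => _ [a Aa <-]; exact: fAB.
Qed.

Lemma cle_fun T U (u0 : U) (A : set T) (B : set U) : A #<= B ->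
  exists f : T -> U, (forall a, A a -> B (f a)) /\
    (forall a b, A a -> A b -> f a = f b -> a = b).
Proof.
move: u0 B; elim/Ppointed: U => U u0 B; first by have [] := (any u0 : False).
move=> /pcard_leP/injfunPex[f fAB finj]; exists f; split.
  by move=> a Aa; exact: fAB.
by move=> a b Aa Ab; apply: finj; rewrite inE.
Qed.

Lemma card_le_total T U (A : set T) (B : set U) : A #<= B \/ B #<= A.
Proof.
have [->|/set0P[a0 Aa0]] := eqVneq A set0; first by left; exact: card_ge0.
have [->|/set0P[b0 Bb0]] := eqVneq B set0; first by right; exact: card_ge0.
pose P (G : set (T * U)) := [/\ G `<=` A `*` B,
  (forall a b b', G (a, b) -> G (a, b') -> b = b') &
  (forall a a' b, G (a, b) -> G (a', b) -> a = a')].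
have [M [[MAB Mf Mi] Mmax]] : exists M, P M /\ forall G, M `<` G -> ~ P G.
  apply: Zorn_bigcup => F FP Ftot; split.
  - by move=> p [G FG Gp]; have [h _ _] := FP G FG; exact: h.
  - move=> a b b' [G1 F1 G1ab] [G2 F2 G2ab'].
    have [s12|s21] := Ftot _ _ F1 F2.
      by have [_ f _] := FP G2 F2; apply: f (s12 _ G1ab) G2ab'.
    by have [_ f _] := FP G1 F1; apply: f G1ab (s21 _ G2ab').
  - move=> a a' b [G1 F1 G1ab] [G2 F2 G2ab'].
    have [s12|s21] := Ftot _ _ F1 F2.
      by have [_ _ f] := FP G2 F2; apply: f (s12 _ G1ab) G2ab'.
    by have [_ _ f] := FP G1 F1; apply: f G1ab (s21 _ G2ab').
have [totA|] := pselect (forall a, A a -> exists b, M (a, b)).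
  left.
  have /choice[f hf] : forall a, exists b, A a -> M (a, b).
    move=> a.
    case: (pselect (A a)) => [/totA[b Mb]|nAa]; [by exists b|by exists b0].
  apply: (cle_of (f := f)).
    by move=> a Aa; have [] := MAB _ (hf a Aa).
  by move=> a b Aa Ab fab; apply: (Mi _ _ (f a)) => //; [exact: hf|rewrite fab; exact: hf].
move=> /existsNP[a1 /not_implyP[Aa1 /forallNP na1]].
right.
have totB : forall b, B b -> exists a, M (a, b).
  move=> b1 Bb1; case: (pselect (exists a, M (a, b1))) => // nb1; exfalso.
  have := Mmax (M `|` [set (a1, b1)]); apply.
    split; first by move=> p Mp; left.
    by move=> /(_ (a1, b1)) h; apply: (na1 b1); apply: h; right.
  split.
  - by move=> p [/MAB//|->].
  - move=> a b b' [Mab|[e1 e2]] [Mab'|[e3 e4]]; subst => //.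
    + exact: Mf Mab Mab'.
    + by have := na1 b.
    + by have := na1 b'.
  - move=> a a' b [Mab|[e1 e2]] [Mab'|[e3 e4]]; subst => //.
    + exact: Mi Mab Mab'.
    + by have := nb1 (ex_intro _ a Mab).
    + by have := nb1 (ex_intro _ a' Mab').
have /choice[g hg] : forall b, exists a, B b -> M (a, b).
  move=> b.
  case: (pselect (B b)) => [/totB[a Ma]|nBb]; [by exists a|by exists a0].
apply: (cle_of (f := g)).
  by move=> b Bb; have [] := MAB _ (hg b Bb).
by move=> b b' Bb Bb' gbb; apply: (Mf (g b)) => //; [exact: hg|rewrite gbb; exact: hg].
Qed.


Lemma nat_pair_inj : exists pi : nat * nat -> nat,
  forall p q, pi p = pi q -> p = q.
Proof.
have : countable ([set: nat] `*` [set: nat]).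
  by apply: countableX; exact: card_lexx.
move=> /(cle_fun 0%N)[pi [_ hpi]]; exists pi => p q; exact: hpi.
Qed.

Lemma nonempty_of_nat T (K : set T) : [set: nat] #<= K -> exists t, K t.
Proof.
move=> NK; apply/set0P/eqP => K0; move: NK; rewrite K0 => /card_le0P h.
by have : [set: nat] 0%N by []; rewrite h.
Qed.

Lemma hessenberg T (K : set T) : [set: nat] #<= K -> K `*` K #<= K.
Proof.
move=> NK; have [t0 Kt0] := nonempty_of_nat NK.
have [e [eK einj]] := cle_fun t0 NK.
have {}einj a b : e a = e b -> a = b by apply: einj.
have [pi piinj] := nat_pair_inj.
pose G0 : set ((T * T) * T) := [set q | exists a b, q = ((e a, e b), e (pi (a, b)))].
pose dom1 (G : set ((T * T) * T)) := [set x | exists y z, G ((x, y), z)].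
pose P (G : set ((T * T) * T)) := [/\ G0 `<=` G,
  (forall p z z', G (p, z) -> G (p, z') -> z = z'),
  (forall p p' z, G (p, z) -> G (p', z) -> p = p'),
  (forall x y, (exists z, G ((x, y), z)) <-> dom1 G x /\ dom1 G y) &
  ((forall p z, G (p, z) -> dom1 G z) /\ dom1 G `<=` K)].
have PG0 : P G0.
  split => //.
  - move=> p z z' [a [b [-> ->]]] [a' [b' [e2 e3 ->]]].
    by rewrite (einj _ _ e2) (einj _ _ e3).
  - move=> p p' z [a [b [-> ->]]] [a' [b' [-> /einj/piinj [<- <-]]]].
    by [].
  - move=> x y; split.
      move=> [z [a [b [[-> ->] _]]]]; split.
        by exists (e b), (e (pi (a, b))), a, b.
      by exists (e a), (e (pi (b, a))), b, a.
    move=> [[y1 [z1 [a [b [[-> _] _]]]]] [y2 [z2 [a' [b' [[-> _] _]]]]]].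
    by exists (e (pi (a, a'))), a, a'.
  - split.
      move=> p z [a [b [_ ->]]].
      by exists (e (pi (a, b))), (e (pi (pi (a, b), pi (a, b)))), (pi (a, b)), (pi (a, b)).
    by move=> x [y [z [a [b [[-> _] _]]]]]; exact: eK.
have memP G q : (P G \/ G = set0) -> G q -> P G.
  by case=> // -> .
have [M [PM' Mmax]] : exists M, (P M \/ M = set0) /\
    forall G, M `<` G -> ~ (P G \/ G = set0).
  apply: Zorn_bigcup => F FP Ftot.
  case: (pselect (exists G, F G /\ P G)) => [[G1 [FG1 PG1]]|nP]; last first.
    right; apply/seteqP; split => // q [G FG Gq].
    by case: nP; exists G; split => //; exact: memP (FP G FG) Gq.
  have mP G q : F G -> G q -> P G by move=> FG; exact: memP (FP G FG).
  have dom_sub G : F G -> dom1 G `<=` dom1 (\bigcup_(G in F) G).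
    by move=> FG x [y [z Gxyz]]; exists y, z, G.
  left; split.
  - by move=> q G0q; exists G1 => //; have [+ _ _ _ _] := PG1; apply.
  - move=> p z z' [G FG Gpz] [G' FG' Gpz'].
    have [GG'|G'G] := Ftot _ _ FG FG'.
      by have [_ f _ _ _] := mP _ _ FG' Gpz'; apply: f (GG' _ Gpz) Gpz'.
    by have [_ f _ _ _] := mP _ _ FG Gpz; apply: f Gpz (G'G _ Gpz').
  - move=> p p' z [G FG Gpz] [G' FG' Gpz'].
    have [GG'|G'G] := Ftot _ _ FG FG'.
      by have [_ _ f _ _] := mP _ _ FG' Gpz'; apply: f (GG' _ Gpz) Gpz'.
    by have [_ _ f _ _] := mP _ _ FG Gpz; apply: f Gpz (G'G _ Gpz').
  - move=> x y; split.
      move=> [z [G FG Gxyz]]; have [_ _ _ d _] := mP _ _ FG Gxyz.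
      have [dx dy] : dom1 G x /\ dom1 G y by apply/d; exists z.
      by split; apply: dom_sub FG _ _.
    move=> [[y1 [z1 [G FG Gx]]] [y2 [z2 [G' FG' Gy]]]].
    have [GG'|G'G] := Ftot _ _ FG FG'.
      have [_ _ _ d _] := mP _ _ FG' Gy.
      have [|z Gz] := (d x y).2; last by exists z, G'.
      by split; [exists y1, z1; exact: GG'|exists y2, z2].
    have [_ _ _ d _] := mP _ _ FG Gx.
    have [|z Gz] := (d x y).2; last by exists z, G.
    by split; [exists y1, z1|exists y2, z2; exact: G'G].
  - split.
      move=> p z [G FG Gpz]; have [_ _ _ _ [r _]] := mP _ _ FG Gpz.
      exact: dom_sub FG _ (r _ _ Gpz).
    move=> x [y [z [G FG Gxyz]]]; have [_ _ _ _ [_ r]] := mP _ _ FG Gxyz.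
    by apply: r; exists y, z.
have PM : P M.
  case: PM' => // M0; exfalso; apply: (Mmax G0); last by left.
  rewrite M0; split => // /(_ ((e 0, e 0), e (pi (0, 0))))%N.
  by move=> h; have := h (ex_intro _ 0%N (ex_intro _ 0%N erefl)).
have {PM' Mmax} Mmax : forall G, M `<` G -> ~ P G by move=> G /Mmax + PG; apply; left.
have [G0M Mf Mi Md [Mr DK]] := PM.
pose D := dom1 M.
have De n : D (e n).
  by exists (e n), (e (pi (n, n))); apply: G0M; exists n, n.
have /choice[m0 hm0] : forall ab : T * T, exists z, D ab.1 -> D ab.2 -> M (ab, z).
  move=> [a b]; case: (pselect (D a /\ D b)) => [/(Md a b)[z Mz]|nab].
    by exists z.
  by exists t0 => /= Da Db; case: nab.
pose m a b := m0 (a, b).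
have mM a b : D a -> D b -> M ((a, b), m a b) by move=> Da Db; exact: hm0.
have mD a b : D a -> D b -> D (m a b) by move=> Da Db; exact: Mr _ _ (mM a b Da Db).
have minj a b a' b' : D a -> D b -> D a' -> D b' -> m a b = m a' b' -> a = a' /\ b = b'.
  move=> Da Db Da' Db' mm.
  have := Mi _ _ _ (mM a b Da Db); rewrite mm => /(_ _ (mM a' b' Da' Db')).
  by case.
have KD : K `\` D #<= D.
  case: (card_le_total (K `\` D) D) => // DKD; exfalso.
  have [h [hK hinj]] := cle_fun t0 DKD.
  pose E := h @` D.
  have EnD y : E y -> ~ D y by move=> [x Dx <-]; have [] := hK x Dx.
  have EK y : E y -> K y by move=> [x Dx <-]; have [] := hK x Dx.
  have /choice[hinv hh] : forall y, exists x, E y -> D x /\ h x = y.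
    move=> y; case: (pselect (E y)) => [[x Dx <-]|nEy]; first by exists x.
    by exists t0.
  pose psi x := if pselect (D x) is left _ then x else hinv x.
  pose code x y : nat := if pselect (D x) is left _ then 0%N
    else if pselect (D y) is left _ then 1%N else 2%N.
  pose v x y := h (m (e (code x y)) (m (psi x) (psi y))).
  pose N x y := [/\ D x \/ E x, D y \/ E y & ~ (D x /\ D y)].
  have psiD x : D x \/ E x -> D (psi x).
    rewrite /psi; case: pselect => // nDx [//|/hh[]//].
  have psiE x : ~ D x -> E x -> h (psi x) = x.
    by rewrite /psi; case: pselect => // nDx _ /hh[].
  have psiDx x : D x -> psi x = x by rewrite /psi; case: pselect.
  have vE x y : N x y -> E (v x y).
    move=> [Dx Dy _]; exists (m (e (code x y)) (m (psi x) (psi y))) => //.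
    exact: (mD _ _ (De _) (mD _ _ (psiD _ Dx) (psiD _ Dy))).
  have code_st x y x' y' : N x y -> N x' y' -> code x y = code x' y' ->
      (D x <-> D x') /\ (D y <-> D y').
    move=> [_ _ nxy] [_ _ nxy']; rewrite /code.
    case: (pselect (D x)) => Dx; case: (pselect (D x')) => Dx' //;
    case: (pselect (D y)) => Dy; case: (pselect (D y')) => Dy' //;
    by move=> _; split; split => //; first [by case: nxy|by case: nxy'|idtac].
  have same x x' : D x \/ E x -> D x' \/ E x' -> (D x <-> D x') ->
      psi x = psi x' -> x = x'.
    move=> Ex Ex' [d1 d2] pp.
    case: (pselect (D x)) => Dx.
      by rewrite -(psiDx _ Dx) pp psiDx //; exact: d1.
    have nDx' : ~ D x' by move/d2.
    have Ex1 : E x by case: Ex.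
    have Ex1' : E x' by case: Ex'.
    have e1 := psiE x Dx Ex1; have e2 := psiE x' nDx' Ex1'.
    by rewrite -e1 -e2 pp.
  have vinj x y x' y' : N x y -> N x' y' -> v x y = v x' y' -> x = x' /\ y = y'.
    move=> Nxy Nx'y' vv.
    have [Ex Ey _] := Nxy; have [Ex' Ey' _] := Nx'y'.
    have mD2 a b : D a \/ E a -> D b \/ E b -> D (m (psi a) (psi b)).
      by move=> ? ?; apply: mD; exact: psiD.
    have := hinj _ _ (mD _ _ (De _) (mD2 _ _ Ex Ey)) (mD _ _ (De _) (mD2 _ _ Ex' Ey')) vv.
    move=> /(minj _ _ _ _ (De _) (mD2 _ _ Ex Ey) (De _) (mD2 _ _ Ex' Ey')) [/einj cc].
    move=> /(minj _ _ _ _ (psiD _ Ex) (psiD _ Ey) (psiD _ Ex') (psiD _ Ey')) [p1 p2].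
    have [s1 s2] := code_st _ _ _ _ Nxy Nx'y' cc.
    by split; apply: same.
  pose M' := M `|` [set q | exists x y, N x y /\ q = ((x, y), v x y)].
  have dM x y z : M ((x, y), z) -> D x /\ D y by move=> Mq; apply/Md; exists z.
  have dM' : dom1 M' = D `|` E.
    apply/seteqP; split.
      move=> x [y [z [Mq|[x' [y' [[Ex _ _] [-> _ _]]]]]]]; last by case: Ex; [left|right].
      by left; have [] := dM _ _ _ Mq.
    move=> x [Dx|Ex]; first by have [y [z Mq]] := Dx; exists y, z; left.
    exists x, (v x x); right; exists x, x; split => //.
    by split; [right|right|move=> [/EnD]].
  apply: (Mmax M'); last split.
  - split; first by move=> q Mq; left.
    have [x Dx] : exists x, D x by exists (e 0%N).
    move=> /(_ ((h x, h x), v (h x) (h x))) MM.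
    have : M ((h x, h x), v (h x) (h x)).
      apply: MM; right; exists (h x), (h x); split => //.
      have Eh : E (h x) by exists x.
      by split; [right|right|move=> [/EnD]].
    by move=> /dM [Dhx _]; apply: (EnD (h x)) => //; exists x.
  - by move=> q G0q; left; exact: G0M.
  - move=> p z z' h1 h2.
    case: h1 => [Mpz|[x [y [Nxy e1]]]]; case: h2 => [Mpz'|[x' [y' [Nxy' e2]]]].
    + exact: Mf Mpz Mpz'.
    + case: e2 => ep _; subst p.
      by have [_ _ []] := Nxy'; exact: dM Mpz.
    + case: e1 => ep _; subst p.
      by have [_ _ []] := Nxy; exact: dM Mpz'.
    + case: e1 => ep ->; case: e2 => ep' ->; move: ep'; rewrite ep.
      by case=> -> ->.
  - move=> p p' z h1 h2.
    case: h1 => [Mpz|[x [y [Nxy e1]]]]; case: h2 => [Mpz'|[x' [y' [Nxy' e2]]]].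
    + exact: Mi Mpz Mpz'.
    + case: e2 => _ ez; exfalso; apply: (EnD z); first by rewrite ez; exact: vE.
      exact: Mr Mpz.
    + case: e1 => _ ez; exfalso; apply: (EnD z); first by rewrite ez; exact: vE.
      exact: Mr Mpz'.
    + case: e1 => -> ez; case: e2 => -> ez'.
      by have [-> ->] := vinj _ _ _ _ Nxy Nxy' (etrans (esym ez) ez').
  - move=> x y; rewrite dM'; split.
      move=> [z [/dM[Dx Dy]|[x' [y' [[Ex Ey _] [-> -> _]]]]]].
        by split; left.
      by split.
    move=> [Ex Ey]; case: (pselect (D x /\ D y)) => [[Dx Dy]|nD].
      by exists (m x y); left; exact: mM.
    by exists (v x y); right; exists x, y; split => //; split => //.
  - rewrite dM'; split.
      move=> p z [Mpz|[x [y [Nxy [_ ->]]]]]; first by left; exact: Mr Mpz.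
      by right; exact: vE.
    by move=> x [/DK//|/EK].
have [k [kD kinj]] := cle_fun t0 KD.
have KD2 : K #<= D.
  apply: (cle_of (f := fun x => if pselect (D x) is left _ then m (e 0%N) x
                                 else m (e 1%N) (k x))).
    move=> x Kx; case: pselect => Dx; apply: mD => //.
    by apply: kD.
  move=> x y Kx Ky; case: pselect => Dx; case: pselect => Dy.
  - by move/(minj _ _ _ _ (De _) Dx (De _) Dy) => [].
  - by move/(minj _ _ _ _ (De _) Dx (De _) (kD y (conj Ky Dy))) => [/einj].
  - by move/(minj _ _ _ _ (De _) (kD x (conj Kx Dx)) (De _) Dy) => [/einj].
  - move/(minj _ _ _ _ (De _) (kD x (conj Kx Dx)) (De _) (kD y (conj Ky Dy))) => [_].
    by apply: kinj.
have [i [iD iinj]] := cle_fun t0 KD2.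
apply: (cle_of (f := fun p => m (i p.1) (i p.2))).
  by move=> [x y] [Kx Ky]; apply: DK; apply: mD; [exact: iD|exact: iD].
move=> [x y] [x' y'] [Kx Ky] [Kx' Ky'] /=.
move/(minj _ _ _ _ (iD _ Kx) (iD _ Ky) (iD _ Kx') (iD _ Ky')) => [e1 e2].
have /= -> := iinj _ _ Kx Kx' e1; have /= -> := iinj _ _ Ky Ky' e2; done.
Qed.


Definition wo : rel (set nat) := sval (well_ordering_principle (set nat)).

Lemma wo_min (P : set (set nat)) : (exists x, P x) ->
  exists z, P z /\ forall x, P x -> wo z x.
Proof.
move=> [x Px].
have [|z [[zP zmin] _]] := svalP (well_ordering_principle (set nat)) [pred y | `[< P y >]].
  by exists x; rewrite unfold_in /= asboolE.
exists z; split; first by move: zP; rewrite unfold_in /= asboolE.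
by move=> y Py; apply: zmin; rewrite unfold_in /= asboolE.
Qed.

Lemma wo_uniq (P : set (set nat)) z z' : P z -> P z' ->
  (forall x, P x -> wo z x) -> (forall x, P x -> wo z' x) -> z = z'.
Proof.
move=> Pz Pz' hz hz'.
have [|w [_ wu]] := svalP (well_ordering_principle (set nat)) [pred y | `[< P y >]].
  by exists z; rewrite unfold_in /= asboolE.
have e1 : w = z.
  apply: wu; split; first by rewrite unfold_in /= asboolE.
  by move=> y; rewrite unfold_in /= asboolE; exact: hz.
have e2 : w = z'.
  apply: wu; split; first by rewrite unfold_in /= asboolE.
  by move=> y; rewrite unfold_in /= asboolE; exact: hz'.
by rewrite -e1 -e2.
Qed.

Lemma wo_refl a : wo a a.
Proof. by have [z [e h]] := @wo_min (fun x => x = a) (ex_intro _ a erefl); subst z; exact: h. Qed.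

Lemma wo_total a b : wo a b \/ wo b a.
Proof.
have [z [[e|e] h]] := @wo_min (fun x => x = a \/ x = b) (ex_intro _ a (or_introl erefl)); subst z.
  by left; apply: h; right.
by right; apply: h; left.
Qed.

Lemma wo_anti a b : wo a b -> wo b a -> a = b.
Proof.
move=> ab ba.
apply: (@wo_uniq (fun x => x = a \/ x = b)); [by left|by right| |].
  by move=> x [->|->] //; exact: wo_refl.
by move=> x [->|->] //; exact: wo_refl.
Qed.

Lemma wo_trans a b c : wo a b -> wo b c -> wo a c.
Proof.
move=> ab bc.
have [z [Pz h]] := @wo_min (fun x => x = a \/ x = b \/ x = c) (ex_intro _ a (or_introl erefl)).
case: Pz => [e|[e|e]]; subst z.
- by apply: h; right; right.
- have ba : wo b a by apply: h; left.
  by rewrite (wo_anti ab ba).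
- have cb : wo c b by apply: h; right; left.
  by rewrite -(wo_anti bc cb).
Qed.

Definition wlt a b := wo a b /\ a <> b.

Lemma wlt_trans a b c : wlt a b -> wlt b c -> wlt a c.
Proof.
move=> [ab nab] [bc nbc]; split; first exact: wo_trans bc.
by move=> ac; subst c; apply: nab; apply: wo_anti.
Qed.

Lemma wlt_wo a b : wlt a b -> wo a b. Proof. by case. Qed.

Lemma nwlt a b : ~ wlt a b -> wo b a.
Proof.
move=> h; case: (wo_total a b) => // ab.
case: (pselect (a = b)) => [->|nab]; first exact: wo_refl.
by case: h.
Qed.

Lemma wlt_irr a : ~ wlt a a. Proof. by case. Qed.

Lemma wlt_asym a b : wlt a b -> ~ wo b a.
Proof. by move=> [ab nab] ba; apply: nab; exact: wo_anti. Qed.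

Lemma wlt_wf : well_founded wlt.
Proof.
move=> a; apply: contrapT => na.
have [z [nz zmin]] := @wo_min (fun x => ~ Acc wlt x) (ex_intro _ a na).
apply: nz; constructor => y yz.
apply: contrapT => ny.
by have := zmin y ny; apply: wlt_asym.
Qed.


Lemma bigcup_le I T W (K : set W) (S : set I) (F : I -> set T) :
  [set: nat] #<= K -> S #<= K -> (forall i, S i -> F i #<= K) ->
  \bigcup_(i in S) F i #<= K.
Proof.
move=> NK SK FK.
have [->|/set0P[i0 Si0]] := eqVneq S set0.
  by rewrite bigcup_set0; exact: card_ge0.
have [w0 Kw0] := nonempty_of_nat NK.
have [e [eK einj]] := cle_fun w0 SK.
have /choice[g hg] : forall i, exists g : T -> W, S i ->
    (forall z, F i z -> K (g z)) /\ (forall a b, F i a -> F i b -> g a = g b -> a = b).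
  move=> i; case: (pselect (S i)) => Si; last by exists (fun=> w0).
  by have [g hg] := cle_fun w0 (FK i Si); exists g.
have /choice[s hs] : forall z, exists i, (\bigcup_(i in S) F i) z -> S i /\ F i z.
  move=> z; case: (pselect ((\bigcup_(i in S) F i) z)) => [[i Si Fiz]|nz].
    by exists i.
  by exists i0.
apply: (@card_le_trans _ _ _ (K `*` K)); last exact: hessenberg.
apply: (cle_of (f := fun z => (e (s z), g (s z) z))).
  move=> z Uz; have [Ss Fs] := hs z Uz; split => /=; first exact: eK.
  by have [h _] := hg _ Ss; exact: h.
move=> a b Ua Ub [e1 e2].
have sab := einj _ _ (hs a Ua).1 (hs b Ub).1 e1.
have [Sa Fa] := hs a Ua; have [Sb Fb] := hs b Ub.
have [_ ginj] := hg _ Sa.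
rewrite -sab in e2 Fb; exact: ginj Fa Fb e2.
Qed.

Lemma union2_le T W (K : set W) (A B : set T) :
  [set: nat] #<= K -> A #<= K -> B #<= K -> A `|` B #<= K.
Proof.
move=> NK AK BK.
have -> : A `|` B = \bigcup_(b in [set: bool]) (if b then A else B).
  apply/seteqP; split.
    by move=> x [Ax|Bx]; [exists true|exists false].
  by move=> x [[] _ /= h]; [left|right].
apply: bigcup_le => //.
  apply: (@card_le_trans _ _ _ [set: nat]) => //.
  apply: (cle_of (f := nat_of_bool)) => // a b _ _.
  by case: a; case: b.
by case.
Qed.

Lemma set1_le T W (K : set W) (p : T) : (exists k, K k) -> [set p] #<= K.
Proof.
move=> [k Kk]; apply: (cle_of (f := fun=> k)) => // a b -> ->.
by [].
Qed.

Lemma cont_inf : [set: nat] #<= cont.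
Proof.
apply: (cle_of (f := fun n => [set n])) => // a b _ _ /(congr1 (fun S => S a)).
by move=> h; have : [set b] a by rewrite -h.
Qed.

Lemma cont_rem1 T (A : set T) p : cont #<= A `|` [set p] -> cont #<= A.
Proof.
move=> /(cle_fun p)[f [fA finj]].
pose e0 (S : set nat) : set nat := [set n.*2.+1 | n in S].
pose e1 (S : set nat) : set nat := [set 0%N] `|` e0 S.
have e0inj S S' : e0 S = e0 S' -> S = S'.
  move=> h; apply/seteqP; split => n Sn.
    have : e0 S n.*2.+1 by exists n.
    by rewrite h => -[m Sm /succn_inj/(congr1 half)]; rewrite !doubleK => <-.
  have : e0 S' n.*2.+1 by exists n.
  by rewrite -h => -[m Sm /succn_inj/(congr1 half)]; rewrite !doubleK => <-.
have e1inj S S' : e1 S = e1 S' -> S = S'.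
  move=> h; apply: e0inj; apply/seteqP; split => n [m Sm <-].
    have : e1 S m.*2.+1 by right; exists m.
    by rewrite h => -[//|].
  have : e1 S' m.*2.+1 by right; exists m.
  by rewrite -h => -[//|].
have e01 S S' : e0 S <> e1 S'.
  move=> h; have : e0 S 0%N by rewrite h; left.
  by case=> m _.
have use (e : set nat -> set nat) : (forall S S', e S = e S' -> S = S') ->
    (forall S, f (e S) <> p) -> cont #<= A.
  move=> einj fp; apply: (cle_of (f := f \o e)).
    by move=> S _ /=; have [//|] := fA (e S) I; move=> /fp.
  by move=> S S' _ _ /= /(finj _ _ I I) /einj.
case: (pselect (exists w, f w = p)) => [[w fw]|nw]; last first.
  by apply: (use id) => // S h; apply: nw; exists S.
case: (pselect (exists S, e0 S = w)) => [[S0 eS0]|n0].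
  apply: (use e1) => // S h; apply: (e01 S0 S).
  by rewrite eS0; apply: finj => //; rewrite h.
apply: (use e0) => // S h; apply: n0; exists S.
by apply: finj => //; rewrite h.
Qed.

Lemma cont_ne_le0 T (A : set T) : cont #<= A -> exists a, A a.
Proof.
move=> h; apply/set0P/eqP => A0; move: h; rewrite A0 => /card_le0P h.
by have : cont set0 by []; rewrite h.
Qed.

Lemma lt_cf_mono U V (A : set U) (B : set V) :
  A #<= B -> lt_cf_cont B -> lt_cf_cont A.
Proof.
move=> AB hB [F [Fs FU]]; apply: hB.
have [A0|/set0P[a0 Aa0]] := eqVneq A set0.
  exfalso; move: FU; rewrite A0 bigcup_set0 => h.
  by have : cont set0 by []; rewrite -h.
have [b0 Bb0] : exists b, B b.
  apply/set0P/eqP => B0; move: AB; rewrite B0 => /card_le0P A0.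
  by move: Aa0; rewrite A0.
have [g [gB ginj]] := cle_fun b0 AB.
exists (fun b => [set w | exists a, A a /\ g a = b /\ F a w]); split.
  move=> b Bb small.
  case: (pselect (exists a, A a /\ g a = b)) => [[a [Aa gab]]|na].
    apply: (Fs a Aa); apply: (card_le_trans small); apply: subset_card_le.
    move=> w [a' [Aa' [ga'b Fa'w]]].
    by have := ginj _ _ Aa' Aa; rewrite ga'b gab => /(_ erefl) <-.
  have [w [a [Aa [gab _]]]] := cont_ne_le0 small.
  by apply: na; exists a.
apply/seteqP; split => // w _.
have : (\bigcup_(a in A) F a) w by rewrite FU.
by case=> a Aa Faw; exists (g a); [exact: gB|exists a].
Qed.


Definition seg t := [set s | wlt s t].
Definition cseg t := [set s | wo s t].
Definition Bnd (J : set (set nat)) W (L : set W) :=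
  forall S, S `<=` J -> S #<= L -> exists u, J u /\ forall s, S s -> wlt s u.

Lemma csegE t : cseg t = seg t `|` [set t].
Proof.
apply/seteqP; split => s.
  by move=> st; case: (pselect (s = t)) => [->|nst]; [right|left].
by move=> [[]//|->]; exact: wo_refl.
Qed.

Lemma C_exists : exists C : set (set nat),
  [/\ (forall t s, C t -> wlt s t -> C s),
      (forall t, C t -> ~ (cont #<= cseg t)) & cont #<= C].
Proof.
case: (pselect (exists t, cont #<= seg t)) => [ex|nex].
  have [t0 [big tmin]] := wo_min ex.
  exists (seg t0); split => //.
  - by move=> t s ts st; exact: wlt_trans st ts.
  - move=> t tt0; rewrite csegE => bc.
    exact: wlt_asym tt0 (tmin t (cont_rem1 bc)).
exists setT; split => //.
by move=> t _; rewrite csegE => bc; apply: nex; exists t; exact: cont_rem1 bc.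
Qed.

Lemma ne_of_le T W (A : set T) (L : set W) : A #<= L -> (exists a, A a) -> exists l, L l.
Proof.
move=> AL [a Aa]; apply/set0P/eqP => L0; move: AL; rewrite L0 => /card_le0P A0.
by move: Aa; rewrite A0.
Qed.

Lemma Bnd_cf (C : set (set nat)) W (L : set W) :
  (forall t, C t -> ~ (cont #<= cseg t)) -> cont #<= C ->
  lt_cf_cont L -> Bnd C L.
Proof.
move=> Csmall Cbig hL S SC SL.
apply: contrapT => nb.
have unb u : C u -> exists s, S s /\ wo u s.
  move=> Cu; apply: contrapT => ns; apply: nb; exists u; split => // s Ss.
  apply: contrapT => nsu; apply: ns; exists s; split => //; exact: nwlt.
have [h [hC hinj]] := cle_fun set0 Cbig.
have [s0 [Ss0 _]] := unb _ (hC set0 I).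
have [l0 Ll0] := ne_of_le SL (ex_intro _ s0 Ss0).
have [g [gL ginj]] := cle_fun l0 SL.
apply: hL.
exists (fun k => [set w | exists s, S s /\ g s = k /\ wo (h w) s]); split.
  move=> k Lk small.
  case: (pselect (exists s, S s /\ g s = k)) => [[s [Ss gsk]]|ns].
    apply: (Csmall s (SC _ Ss)); apply: (card_le_trans small).
    apply: (cle_of (f := h)).
      move=> w [s' [Ss' [gs'k hws']]].
      by have := ginj _ _ Ss' Ss; rewrite gs'k gsk => /(_ erefl) <-.
    by move=> a b _ _; apply: hinj.
  have [w [s [Ss [gsk _]]]] := cont_ne_le0 small.
  by apply: ns; exists s.
apply/seteqP; split => // w _.
have [s [Ss hws]] := unb _ (hC w I).
by exists (g s); [exact: gL|exists s].
Qed.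

Lemma Bnd_mono J W W' (L : set W) (L' : set W') : Bnd J L -> L' #<= L -> Bnd J L'.
Proof. by move=> hB LL S SJ SL; apply: hB => //; exact: card_le_trans SL LL. Qed.

Lemma Bnd_K (C : set (set nat)) W (K : set W) :
  (forall t s, C t -> wlt s t -> C s) -> cont #<= C ->
  [set: nat] #<= K -> ~ (cont #<= K) ->
  exists J, J `<=` C /\ Bnd J K.
Proof.
move=> Cdown Cbig NK nK.
have [J [JC [Jsmall Jbig]]] : exists J, J `<=` C /\
    (forall s, J s -> seg s #<= K) /\ ~ (J #<= K).
  case: (pselect (exists t, C t /\ ~ (seg t #<= K))) => [ex|nex].
    have [j [[Cj nj] jmin]] := wo_min ex.
    exists (seg j); split; first by move=> s sj; exact: Cdown Cj sj.
    split => // s sj; apply: contrapT => ns.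
    by have := jmin s (conj (Cdown _ _ Cj sj) ns); apply: wlt_asym.
  exists C; split => //; split.
    by move=> s Cs; apply: contrapT => ns; apply: nex; exists s.
  by move=> CK; apply: nK; exact: card_le_trans CK.
exists J; split => // S SJ SK.
apply: contrapT => nb; apply: Jbig.
have JU : J `<=` \bigcup_(s in S) cseg s.
  move=> u Ju; apply: contrapT => nu; apply: nb; exists u; split => // s Ss.
  apply: contrapT => nsu; apply: nu; exists s => //; exact: nwlt.
apply: (card_le_trans (subset_card_le JU)).
apply: bigcup_le => // s Ss; rewrite csegE.
apply: union2_le => //; first exact: Jsmall (SJ _ Ss).
by apply: set1_le; exact: nonempty_of_nat.
Qed.


Unset Implicit Arguments. Set Strict Implicit.

Theorem theorem4p2 (X : topologicalType) :
  locally_c X -> c_fair X ->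
  (forall x : X, tightness_lt_cf_cont x) ->
  cont #<= [set: X] -> ~ ([set: X] #<= cont) ->
  exists U : set X, open U /\ closed U /\ U #= cont /\ lindelof_number_eq_cont U.
Proof.
move=> lc cf tg cX ncX.
have [x0 _] := cont_ne_le0 cX.
have /choice[Ob hOb] : forall x : X, exists V, open V /\ V x /\ V #<= cont.
  move=> x; have [N [Nx Nc]] := lc x.
  move: Nx; rewrite nbhsE => -[V [oV Vx] VN].
  by exists V; split => //; split => //; exact: card_le_trans (subset_card_le VN) Nc.
have /choice[Kx hK] : forall x : X, exists K : set (set nat),
    lt_cf_cont K /\ tightness_le x K by exact: tg.
have [b [_ binj]] := cle_fun x0 cX.
pose Bs := b @` [set: set nat].
have Bsc : Bs #<= cont by exact: card_image_le.
have cBs : cont #<= Bs.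
  by apply: (cle_of (f := b)) => [a _|a a' _ _]; [exists a|exact: binj].
have [C [Cdown Csmall Cbig]] := C_exists.
pose step (t : set nat) (f : forall s, wlt s t -> set X) : set X :=
  closure (Bs `|` [set z | exists s (p : wlt s t) x, f s p x /\ Ob x z]
     `|` [set xget x0 (~` [set z | exists s (p : wlt s t), f s p z])]).
pose Q := Fix wlt_wf (fun _ => set X) step.
pose W t := [set z | exists s (p : wlt s t), Q s z].
pose y t := xget x0 (~` W t).
pose A t := Bs `|` [set z | exists s (p : wlt s t) x, Q s x /\ Ob x z] `|` [set y t].
have QE t : Q t = closure (A t).
  rewrite /Q Fix_eq //.
  move=> t' f g fg; congr step.
  apply: functional_extensionality_dep => s.
  apply: functional_extensionality_dep => p; exact: fg.
have Qcl t : closed (Q t) by rewrite QE; exact: closed_closure.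
have AQ t : A t `<=` Q t by rewrite QE; exact: subset_closure.
have OQ s t x : wlt s t -> Q s x -> Ob x `<=` Q t.
  by move=> st Qsx z Oz; apply: AQ; left; right; exists s, st, x.
have QQ s t : wlt s t -> Q s `<=` Q t.
  by move=> st x Qsx; apply: OQ st Qsx _ _; have [_ []] := hOb x.
have yQ t : Q t (y t) by apply: AQ; right.
have segc t : seg t #<= cont by exact: card_leT.
have Qsmall t : C t -> Q t #<= cont.
  elim/(well_founded_induction wlt_wf): t => t IH Ct.
  have Wc : W t #<= cont.
    apply: (@card_le_trans _ _ _ (\bigcup_(s in seg t) Q s)).
      by apply: subset_card_le => z [s [st Qsz]]; exists s.
    apply: bigcup_le => //; first exact: cont_inf.
    by move=> s st; apply: IH => //; exact: Cdown Ct st.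
  have Ac : A t #<= cont.
    apply: union2_le; [exact: cont_inf| |]; last first.
      by apply: set1_le; exists set0.
    apply: union2_le => //; first exact: cont_inf.
    apply: (@card_le_trans _ _ _
      (\bigcup_(s in seg t) \bigcup_(x in Q s) Ob x)).
      by apply: subset_card_le => z [s [st [x [Qsx Oxz]]]]; exists s => //; exists x.
    apply: bigcup_le => //; first exact: cont_inf.
    move=> s st; apply: bigcup_le; [exact: cont_inf| |].
      by apply: IH => //; exact: Cdown Ct st.
    by move=> x _; have [_ []] := hOb x.
  have cA : cont #<= A t.
    by apply: (card_le_trans cBs); apply: subset_card_le => z Bz; left; left.
  have /cf : A t #= cont by apply/card_eqPle.
  by rewrite -QE => /card_eqPle[].
have Wsmall t : C t -> W t #<= cont.
  move=> Ct; apply: (@card_le_trans _ _ _ (\bigcup_(s in seg t) Q s)).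
    by apply: subset_card_le => z [s [st Qsz]]; exists s.
  apply: bigcup_le => //; first exact: cont_inf.
  by move=> s st; apply: Qsmall; exact: Cdown Ct st.
have yW t : C t -> ~ W t (y t).
  move=> Ct; apply: (@xgetPex _ x0 (~` W t)).
  apply: contrapT => nW; apply: ncX.
  apply: (card_le_trans _ (Wsmall t Ct)); apply: subset_card_le => z _.
  by apply: contrapT => nz; apply: nW; exists z.
have yQn s t : C t -> wlt s t -> ~ Q s (y t).
  by move=> Ct st Qs; apply: (yW t Ct); exists s, st.
pose V J := \bigcup_(t in J) Q t.
have clo J : (forall x, Bnd J (Kx x)) -> closed (V J).
  move=> BJ x clx; have [_ tl] := hK x.
  have [B [BV [BK clB]]] := tl _ clx.
  have /choice[idx hidx] : forall z, exists t, B z -> J t /\ Q t z.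
    move=> z; case: (pselect (B z)) => [/BV[t Jt Qtz]|nB]; first by exists t.
    by exists set0.
  have SJ : idx @` B `<=` J by move=> _ [z Bz <-]; have [] := hidx z Bz.
  have SK : idx @` B #<= Kx x by exact: card_le_trans (card_image_le _ _) BK.
  have [u [Ju hu]] := BJ x _ SJ SK.
  have BQ : B `<=` Q u.
    move=> z Bz; have [_ Qz] := hidx z Bz.
    by apply: QQ (hu _ _) _ Qz; exists z.
  by exists u => //; apply: Qcl; exact: closure_subset BQ _ clB.
have opn J : (forall t, J t -> exists u, J u /\ wlt t u) -> open (V J).
  move=> nomax.
  have -> : V J = \bigcup_(t in J) \bigcup_(x in Q t) Ob x.
    apply/seteqP; split.
      by move=> z [t Jt Qtz]; exists t => //; exists z => //; have [_ []] := hOb z.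
    move=> z [t Jt [x Qtx Oxz]]; have [u [Ju tu]] := nomax t Jt.
    by exists u => //; exact: OQ tu Qtx _ Oxz.
  apply: bigcup_open => t _; apply: bigcup_open => x _.
  by have [] := hOb x.
have noL J (K : set (set nat)) : J `<=` C -> Bnd J K ->
    (forall x, Bnd J (Kx x)) -> (exists k, K k) -> ~ lindelof_le (V C) K.
  move=> JC BJ BJx Kne hl.
  have VJcl := clo J BJx.
  pose Ob' t := \bigcup_(x in Q t) Ob x.
  pose cov := [set Wc | (exists t, J t /\ Wc = Ob' t) \/ Wc = ~` V J].
  have covo : forall Wc, cov Wc -> open Wc.
    move=> Wc [[t [Jt ->]]|->]; last exact: closed_openC.
    by apply: bigcup_open => x _; have [] := hOb x.
  have covU : V C `<=` \bigcup_(Wc in cov) Wc.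
    move=> z [t Ct Qtz]; case: (pselect (V J z)) => [[t' Jt' Qz]|nz].
      by exists (Ob' t'); [left; exists t'|exists z => //; have [_ []] := hOb z].
    by exists (~` V J) => //; right.
  have [D [DC [DK Dcov]]] := hl cov covo covU.
  have /choice[idx hidx] : forall Wc, exists t,
      (exists t, J t /\ Wc = Ob' t) -> J t /\ Wc = Ob' t.
    move=> Wc; case: (pselect (exists t, J t /\ Wc = Ob' t)) => [[t ht]|nt].
      by exists t.
    by exists set0.
  pose DD := [set Wc | D Wc /\ exists t, J t /\ Wc = Ob' t].
  have SJ : idx @` DD `<=` J by move=> _ [Wc [_ ex] <-]; have [] := hidx Wc ex.
  have SK : idx @` DD #<= K.
    apply: card_le_trans (card_image_le _ _) _.
    by apply: card_le_trans DK; apply: subset_card_le => Wc [].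
  have [u [Ju hu]] := BJ _ SJ SK.
  have [u' [Ju' hu']] := BJ [set u] (fun _ e => match esym e with erefl => Ju end)
    (set1_le _ Kne).
  have uu' : wlt u u' by exact: hu'.
  have Cu' := JC _ Ju'.
  have : V C (y u') by exists u'.
  move=> /Dcov[Wc DW Wy].
  case: (DC _ DW) => [ex|eW]; last first.
    by move: Wy; rewrite eW; apply; exists u'.
  have [Jt eW] := hidx Wc ex.
  have tu : wlt (idx Wc) u by apply: hu; exists Wc => //; split.
  move: Wy; rewrite eW => -[x Qx Oxy].
  by apply: (yQn u u' Cu' uu'); exact: OQ tu Qx _ Oxy.
have BC x : Bnd C (Kx x) by apply: Bnd_cf => //; have [] := hK x.
have Kne x : exists k, Kx x k.
  have [_ tl] := hK x.
  have [|B [Bx [BK clB]]] := tl [set x]; first exact: subset_closure.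
  apply: ne_of_le BK _.
  apply/set0P/eqP => B0; move: clB; rewrite B0 closure0.
  by [].
have Cnomax t : C t -> exists u, C u /\ wlt t u.
  move=> Ct; have [u [Cu hu]] := BC x0 [set t]
    (fun _ e => match esym e with erefl => Ct end) (set1_le _ (Kne x0)).
  by exists u; split => //; exact: hu.
exists (V C); split; first exact: opn.
split; first exact: clo.
split.
  apply/card_eqPle; split.
    by apply: bigcup_le; [exact: cont_inf|exact: card_leT|exact: Qsmall].
  apply: (card_le_trans Cbig); apply: (cle_of (f := y)).
    by move=> t Ct; exists t.
  move=> s t Cs Ct yst; apply: contrapT => nst.
  case: (wo_total s t) => [st|ts].
    by apply: (yQn s t Ct (conj st nst)); rewrite -yst.
  have nts : t <> s by move=> e; apply: nst.
  by apply: (yQn t s Cs (conj ts nts)); rewrite yst.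
split.
  move=> cov covo covU.
  have /choice[pk hpk] : forall z, exists Wc, V C z -> cov Wc /\ Wc z.
    move=> z; case: (pselect (V C z)) => [/covU[Wc cW Wz]|nz]; first by exists Wc.
    by exists set0.
  exists (pk @` V C); split; first by move=> _ [z Vz <-]; have [] := hpk z Vz.
  split; last by move=> z Vz; exists (pk z); [exists z|have [] := hpk z Vz].
  apply: card_le_trans (card_image_le _ _) _.
  by apply: bigcup_le; [exact: cont_inf|exact: card_leT|exact: Qsmall].
move=> [K [nK [NK hl]]].
case: (pselect (forall x, Kx x #<= K)) => [allK|].
  have [J [JC BJ]] := Bnd_K Cdown Cbig NK nK.
  apply: (noL J K JC BJ _ (nonempty_of_nat NK) hl).
  by move=> x; exact: Bnd_mono BJ (allK x).
move=> /existsNP[x nx].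
case: (card_le_total (Kx x) K) => // KK.
have lK : lt_cf_cont K by apply: lt_cf_mono KK _; have [] := hK x.
apply: (noL C K (@subset_refl _ C) _ BC (nonempty_of_nat NK) hl).
exact: Bnd_cf.
Qed.
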